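(* Let $X$ be a real locally uniformly convex Banach space and let $\varphi$ be a gauge function. Then for every $R>0$ and every $x_0\in X$ there exists a nondecreasing function $\psi=\psi(R,x_0):[0,\infty)\to[0,\infty)$ such that $\psi(0)=0$, $\psi(r)>0$ for all $r>0$, and $$\langle x^*-x_0^*,\,x-x_0\rangle\ \ge\ \psi(\|x-x_0\|)\,\|x-x_0\|$$ for all $x\in X$ with $\|x-x_0\|\le R$, all $x^*\in J_\varphi x$ and all $x_0^*\in J_\varphi x_0$.
   Context: A real Banach space $X$ is locally uniformly convex if for every $x_0\in X$ with $\|x_0\|=1$ and every $\varepsilon\in(0,2]$ there is $\delta=\delta(\varepsilon,x_0)>0$ such that for all $x\in X$ with $\|x\|=1$ and $\|x-x_0\|\ge\varepsilon$ one has $\|x+x_0\|\le 2(1-\delta)$. A gauge function is a strictly increasing continuous function $\varphi:[0,\infty)\to[0,\infty)$ with $\varphi(0)=0$ and $\varphi(r)\to\infty$ as $r\to\infty$. The duality mapping corresponding to $\varphi$ is the (possibly multivalued) map $J_\varphi:X\to 2^{X^*}$, $J_\varphi x=\{x^*\in X^*:\langle x^*,x\rangle=\varphi(\|x\|)\|x\|,\ \|x^*\|=\varphi(\|x\|)\}$. *)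

(* Defs.v *)
From HB Require Import structures.
From mathcomp Require Import all_boot all_order all_algebra.
From mathcomp Require Import all_classical all_reals all_analysis.
Set Implicit Arguments. Unset Strict Implicit. Unset Printing Implicit Defensive.
Import Order.TTheory GRing.Theory Num.Theory.
Import numFieldNormedType.Exports.
Local Open Scope classical_set_scope.
Local Open Scope ring_scope.

Definition locally_uniformly_convex {R : realType} (X : normedModType R) : Prop :=
  forall x0 : X, `|x0| = 1 ->
  forall eps : R, 0 < eps <= 2 ->
  exists delta : R, 0 < delta /\
    forall x : X, `|x| = 1 -> eps <= `|x - x0| -> `|x + x0| <= 2 * (1 - delta).

Definition gauge_function {R : realType} (phi : R -> R) : Prop :=
  [/\ (forall r s : R, 0 <= r -> r < s -> phi r < phi s),
      {within [set r : R | 0 <= r], continuous phi},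
      phi 0 = 0 &
      phi r @[r --> +oo] --> +oo].

Definition dual_elt {R : realType} (X : normedModType R) (f : X -> R) : Prop :=
  (forall (a : R) (x y : X), f (a *: x + y) = a * f x + f y) /\ continuous f.

Definition dual_norm {R : realType} (X : normedModType R) (f : X -> R) : R :=
  sup [set `|f y| | y in [set y : X | `|y| <= 1]].

Definition duality_map {R : realType} (X : normedModType R) (phi : R -> R)
    (x : X) (f : X -> R) : Prop :=
  [/\ dual_elt f, f x = phi `|x| * `|x| & dual_norm f = phi `|x|].

(* Main.v *)
Require Import Defs.
From HB Require Import structures.
From mathcomp Require Import all_boot all_order all_algebra.
From mathcomp Require Import all_classical all_reals all_analysis.
From mathcomp Require Import ring lra.
Import Order.TTheory GRing.Theory Num.Theory.
Import numFieldNormedType.Exports.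
Local Open Scope classical_set_scope.
Local Open Scope ring_scope.
Section S.
Variables (R : realType) (X : normedModType R) (f : X -> R).
Hypothesis hf : dual_elt f.

Lemma lin0 : f 0 = 0.
Proof.
case: hf => hl _. have := hl 1 0 0. rewrite scale1r addr0 mul1r.
by move=> h; apply: (addrI (f 0)); rewrite addr0.
Qed.

Lemma linZ a x : f (a *: x) = a * f x.
Proof. case: hf => hl _. by have := hl a x 0; rewrite addr0 lin0 addr0. Qed.

Lemma linD x y : f (x + y) = f x + f y.
Proof. case: hf => hl _. by have := hl 1 x y; rewrite scale1r mul1r. Qed.

Lemma linB x y : f (x - y) = f x - f y.
Proof. by rewrite linD -scaleN1r linZ mulN1r. Qed.

Lemma dual_bounded : exists M, forall y : X, `|y| <= 1 -> `|f y| <= M.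
Proof.
case: hf => _ hc.
have := hc 0. move=> /cvgr_dist_lt /(_ 1 ltr01).
rewrite lin0 => /nbhs_norm0P [e e0 He].
exists (2 / e) => y hy.
have H := He ((e/2) *: y).
have : `|(e/2) *: y| < e.
  rewrite normrZ gtr0_norm ?divr_gt0 //.
  apply: (le_lt_trans (y := e/2)). by rewrite -[X in _ <= X]mulr1 ler_wpM2l // divr_ge0 // ltW.
  by rewrite ltr_pdivrMr // ltr_pMr // ltr1n.
move=> /H /=. rewrite linZ sub0r normrN normrM gtr0_norm ?divr_gt0 //.
move=> h. rewrite ler_pdivlMr //. rewrite mulrC.
have e0r : 0 < e by []. move: h; rewrite -(ltr_pM2l (x:=2)) // mulr1 mulrA mulrCA divff ?pnatr_eq0 // mulr1 => h; exact: ltW.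
Qed.

Lemma dual_ineq y : `|f y| <= dual_norm f * `|y|.
Proof.
have [M hM] := dual_bounded.
have hub : has_ubound [set `|f y| | y in [set y : X | `|y| <= 1]].
  by exists M => _ [z hz <-]; apply: hM.
have sup1 : forall z : X, `|z| <= 1 -> `|f z| <= dual_norm f.
  move=> z hz; apply: ub_le_sup => //. by exists z.
have [->|y0] := eqVneq y 0.
  by rewrite lin0 !normr0 mulr0.
have ny : 0 < `|y| by rewrite normr_gt0.
have := sup1 (`|y|^-1 *: y).
rewrite normrZ normrV ?unitfE ?normr_eq0 // normr_id mulVf ?normr_eq0 // lexx.
move=> /(_ isT). rewrite linZ normrM normrV ?unitfE ?normr_eq0 // normr_id.
by rewrite ler_pdivrMl // mulrC.
Qed.
End S.
Arguments lin0 {R X f}.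
Arguments linZ {R X f}.
Arguments linD {R X f}.
Arguments linB {R X f}.
Arguments dual_ineq {R X f}.

Section Main.
Variables (R : realType) (X : normedModType R) (phi : R -> R).
Hypothesis hphi : gauge_function phi.

Lemma phi_strict r s : 0 <= r -> r < s -> phi r < phi s.
Proof. by case: hphi => h _ _ _; apply: h. Qed.

Lemma phi_mono r s : 0 <= r -> r <= s -> phi r <= phi s.
Proof.
move=> r0; rewrite le_eqVlt => /orP [/eqP ->//|rs].
by apply: ltW; apply: phi_strict.
Qed.

Lemma phi0 : phi 0 = 0. Proof. by case: hphi. Qed.

Lemma phi_ge0 r : 0 <= r -> 0 <= phi r.
Proof. by move=> r0; rewrite -phi0; apply: phi_mono. Qed.

Lemma Qlow (x x0 : X) f f0 : duality_map phi x f -> duality_map phi x0 f0 ->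
  (phi `|x| - phi `|x0|) * (`|x| - `|x0|) <= f (x - x0) - f0 (x - x0) /\
  phi `|x| * (2 * `|x| - `|x + x0|) + phi `|x0| * (2 * `|x0| - `|x + x0|)
    <= f (x - x0) - f0 (x - x0).
Proof.
case=> hf fx nf [hf0 f0x0 nf0].
rewrite (linB hf) (linB hf0) fx f0x0.
have h1 : f x0 <= phi `|x| * `|x0|.
  by rewrite -nf; apply: le_trans (ler_norm _) (dual_ineq hf _).
have h2 : f0 x <= phi `|x0| * `|x|.
  by rewrite -nf0; apply: le_trans (ler_norm _) (dual_ineq hf0 _).
have h3 : f (x + x0) <= phi `|x| * `|x + x0|.
  by rewrite -nf; apply: le_trans (ler_norm _) (dual_ineq hf _).
have h4 : f0 (x + x0) <= phi `|x0| * `|x + x0|.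
  by rewrite -nf0; apply: le_trans (ler_norm _) (dual_ineq hf0 _).
rewrite (linD hf) fx in h3. rewrite (linD hf0) f0x0 in h4.
split; nra.
Qed.

Lemma Q_ge0 (x x0 : X) f f0 : duality_map phi x f -> duality_map phi x0 f0 ->
  0 <= f (x - x0) - f0 (x - x0).
Proof.
move=> h h0; have [H _] := @Qlow x x0 f f0 h h0; apply: le_trans H.
have [le|le] := leP `|x| `|x0|.
  have := phi_mono _ _ (normr_ge0 _) le; nra.
have := phi_mono _ _ (normr_ge0 _) (ltW le); nra.
Qed.

Hypothesis luc : locally_uniformly_convex X.

Lemma key (x0 : X) r : 0 < r -> exists m, 0 < m /\
  forall (x : X) f f0, r <= `|x - x0| -> duality_map phi x f ->
    duality_map phi x0 f0 -> m <= f (x - x0) - f0 (x - x0).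
Proof.
move=> r0.
have [->|x00] := eqVneq x0 0.
  exists (phi r * r); split; first by rewrite mulr_gt0 // -phi0 phi_strict.
  move=> x f f0 hr h h0. have [H _] := @Qlow x 0 f f0 h h0.
  apply: le_trans H. rewrite subr0 in hr. rewrite normr0 phi0 !subr0.
  have := phi_mono _ _ (ltW r0) hr. have := phi_ge0 _ (ltW r0). nra.
set a := `|x0|.
have a0 : 0 < a by rewrite normr_gt0.
set u0 := a^-1 *: x0.
have nu0 : `|u0| = 1.
  by rewrite normrZ normrV ?unitfE ?normr_eq0 // normr_id mulVf // normr_eq0.
have x0E : x0 = a *: u0 by rewrite scalerA mulfV ?scale1r // gt_eqF.
clearbody u0.
set e0 := (r/2) / (a + r/2).
have e0pos : 0 < e0 by rewrite divr_gt0 // ?addr_gt0 // divr_gt0.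
have e0le : e0 <= 2.
  rewrite ler_pdivrMr ?addr_gt0 ?divr_gt0 //; lra.
have e0b : 0 < e0 <= 2 by rewrite e0pos e0le.
have [d [d0 hd]] := luc u0 nu0 e0 e0b.
set eps := Num.min (r/2) (Num.min (a/2) (a * d / 6)).
have ep1 : eps <= r/2 by rewrite ge_min lexx.
have ep2 : eps <= a/2 by rewrite ge_min ge_min lexx orbT.
have ep3 : eps <= a * d / 6 by rewrite ge_min ge_min lexx !orbT.
have ep0 : 0 < eps by rewrite !lt_min !divr_gt0 ?mulr_gt0.
set c := eps * Num.min (phi (a + eps) - phi a) (phi a - phi (a - eps)).
have c1 : c <= eps * (phi (a + eps) - phi a)
  by rewrite ler_wpM2l ?ge_min ?lexx // ltW.
have c2 : c <= eps * (phi a - phi (a - eps))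
  by rewrite ler_wpM2l ?ge_min ?lexx ?orbT // ltW.
have pa0 : 0 < phi a by rewrite -phi0 phi_strict.
have c0 : 0 < c.
  rewrite mulr_gt0 // lt_min !subr_gt0 !phi_strict //; lra.
exists (Num.min c (phi a * a * d / 2)); split.
  by rewrite lt_min c0 /= !divr_gt0 ?mulr_gt0.
move=> x f f0 hr h h0.
have m1 : Num.min c (phi a * a * d / 2) <= c by rewrite ge_min lexx.
have m2 : Num.min c (phi a * a * d / 2) <= phi a * a * d / 2
  by rewrite ge_min lexx orbT.
have [Q1 Q2] := @Qlow x x0 f f0 h h0.
set s := `|x| in Q1 Q2 *.
set Q := f (x - x0) - f0 (x - x0) in Q1 Q2 *.
rewrite -/a in Q1 Q2.
have s0 : 0 <= s by rewrite /s normr_ge0.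
have [hs1|hs1] := leP (a + eps) s.
  have p1 := phi_mono _ _ (addr_ge0 (ltW a0) (ltW ep0)) hs1.
  have p2 : phi a < phi (a + eps) by apply: phi_strict; lra.
  have : eps * (phi (a + eps) - phi a) <= (phi s - phi a) * (s - a).
    rewrite mulrC; apply: ler_pM; lra.
  lra.
have [hs2|hs2] := leP s (a - eps).
  have p1 := phi_mono _ _ s0 hs2.
  have p2 : phi (a - eps) < phi a by apply: phi_strict; lra.
  have : eps * (phi a - phi (a - eps)) <= (a - s) * (phi a - phi s).
    apply: ler_pM; lra.
  lra.
have sp : 0 < s by lra.
set u := s^-1 *: x.
have nu : `|u| = 1.
  by rewrite normrZ normrV ?unitfE ?gt_eqF // ger0_norm // mulVf // gt_eqF.
have xE : x = s *: u by rewrite /u scalerA mulfV ?scale1r // gt_eqF.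
clearbody u.
have sa : `|s - a| <= eps by rewrite ler_norml; apply/andP; split; lra.
have hA : `|x - x0| <= s * `|u - u0| + eps.
  have -> : x - x0 = s *: (u - u0) + (s - a) *: u0.
    by rewrite scalerBr scalerBl -xE -x0E addrA subrK.
  apply: le_trans (ler_normD _ _) _.
  rewrite !normrZ nu0 mulr1 (ger0_norm (ltW sp)); lra.
have ge0t := normr_ge0 (u - u0).
have he0 : e0 <= `|u - u0|.
  rewrite /e0 ler_pdivrMr ?addr_gt0 ?divr_gt0 //; nra.
have hw := hd u nu he0.
have hB : `|x + x0| <= s * `|u + u0| + eps.
  have -> : x + x0 = s *: (u + u0) + (a - s) *: u0.
    by rewrite scalerDr scalerBl -xE -x0E -addrA [s *: u0 + _]addrC subrK.
  apply: le_trans (ler_normD _ _) _.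
  rewrite !normrZ nu0 mulr1 (ger0_norm (ltW sp)) distrC; lra.
have sd : a * d / 2 <= s * d.
  have : a / 2 <= s by lra. move=> h2; have := ler_wpM2r (ltW d0) h2; lra.
have T1 : 0 <= phi s * (2 * s - `|x + x0|).
  by apply: mulr_ge0; [apply: phi_ge0|]; nra.
have T2 : phi a * (a * d / 2) <= phi a * (2 * a - `|x + x0|).
  by apply: ler_wpM2l; [apply: ltW|]; nra.
lra.
Qed.
End Main.

Theorem theorem2 (R : realType) (X : completeNormedModType R) (phi : R -> R) :
  locally_uniformly_convex X -> gauge_function phi ->
  forall (Rad : R) (x0 : X), 0 < Rad ->
  exists psi : R -> R,
    [/\ (forall r s : R, 0 <= r -> r <= s -> psi r <= psi s),
        (forall r : R, 0 <= r -> 0 <= psi r),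
        psi 0 = 0,
        (forall r : R, 0 < r -> 0 < psi r) &
        (forall (x : X) (f f0 : X -> R), `|x - x0| <= Rad ->
           duality_map phi x f -> duality_map phi x0 f0 ->
           psi `|x - x0| * `|x - x0| <= f (x - x0) - f0 (x - x0))].
Proof.
move=> luc hphi Rad x0 R0.
pose S r := [set q : R | q = 1 \/ exists x f f0, [/\ r <= `|x - x0|, `|x - x0| <= Rad,
  duality_map phi x f, duality_map phi x0 f0 &
  q = (f (x - x0) - f0 (x - x0)) / `|x - x0|]].
have Sge0 r q : S r q -> 0 <= q.
  case=> [->//|[x [f [f0 [_ _ h h0 ->]]]]].
  by apply: divr_ge0 => //; apply: (@Q_ge0 R X phi hphi _ _ _ _ h h0).
have Sne r : nonempty (S r) by exists 1; left.
have Slb r : has_lbound (S r) by exists 0 => q /Sge0.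
have inf0 r : 0 <= inf (S r) by apply: lb_le_inf => // q /Sge0.
exists (fun r => if r <= 0 then 0 else inf (S r)); split.
- move=> r s r0 rs; case: ifP => hr; first by case: ifP.
  move/negbT: hr; rewrite -ltNge => hr.
  have -> : (s <= 0) = false by apply/negbTE; rewrite -ltNge; lra.
  apply: lb_le_inf => // q Sq; apply: ge_inf => //.
  case: Sq => [->|[x [f [f0 [h1 h2 h3 h4 ->]]]]]; first by left.
  by right; exists x, f, f0; split => //; apply: le_trans h1.
- by move=> r _; case: ifP.
- by rewrite lexx.
- move=> r r0; rewrite leNgt r0 /=.
  have [m [m0 hm]] := @key R X phi hphi luc x0 r r0.
  apply: (@lt_le_trans _ _ (Num.min 1 (m / Rad))).
    by rewrite lt_min ltr01 divr_gt0.
  apply: lb_le_inf => // q [->|[x [f [f0 [h1 h2 h3 h4 ->]]]]].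
    by rewrite ge_min lexx.
  rewrite ge_min; apply/orP; right.
  have dpos : 0 < `|x - x0| by lra.
  rewrite ler_pdivrMr // mulrAC ler_pdivlMr //.
  have := hm x f f0 h1 h3 h4.
  have := @Q_ge0 R X phi hphi _ _ _ _ h3 h4.
  nra.
- move=> x f f0 hR h h0.
  have [d0|dpos] := eqVneq `|x - x0| 0.
    rewrite d0 mulr0; have /normr0_eq0 -> := d0.
    case: h => hf _ _; case: h0 => hf0 _ _.
    by rewrite (lin0 hf) (lin0 hf0) subrr.
  have dp : 0 < `|x - x0| by rewrite lt_def dpos normr_ge0.
  have -> : (`|x - x0| <= 0) = false by rewrite leNgt dp.
  rewrite -ler_pdivlMr //.
  apply: ge_inf => //; right; exists x, f, f0; split => //.
Qed.
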